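(* Let $M$ be an upper triangular matrix of size $d+1$ with non-negative integer entries. Then $M$ is the rank matrix $M_{\ell,A}$ of some Artinian Gorenstein algebra $A$ with socle degree $d$ and some linear form $\ell\in A_1$ only if the following conditions are satisfied. \begin{itemize} \item[$(i)$] For every $0\leq i\leq d$, $\operatorname{diag}(i,M)$ is an O-sequence, and $h_A=\operatorname{diag}(0,M)$; \item[$(ii)$] for every $0\leq i\leq d-1$, the difference vector $\operatorname{diag}(i,M)-\left(\operatorname{diag}(i+1,M)\right)_+$ is an O-sequence; \item[$(iii)$] for any $2\times 2$ square submatrix of successive entries on and above the diagonal of $M$ of the form $\begin{pmatrix} u&v\\ w&z\end{pmatrix}$ we have that $w+v\geq u+z$. \end{itemize}
   Context: Let $S=\mathsf{k}[x_1,\dots,x_n]$, $n\geq 2$, be a standard graded polynomial ring over a field $\mathsf{k}$ of characteristic zero, acting by differentiation on the dual ring $R=\mathsf{k}[X_1,\dots,X_n]$. Let $A=S/\operatorname{ann}(F)$ be a graded Artinian Gorenstein algebra with dual generator $F\in R_d$, $d\geq 2$, so $A$ has socle degree $d$ and Hilbert function $h_A$ with $h_A(i)=\dim_{\mathsf{k}}A_i$. For a linear form $\ell\in A_1$, the rank matrix $M_{\ell,A}$ is the $(d+1)\times(d+1)$ upper triangular matrix (rows and columns indexed $0,\dots,d$) with $(M_{\ell,A})_{i,j}=\operatorname{rk}(\times \ell^{j-i}:A_i\to A_j)$ for $i\leq j$ and $0$ for $i>j$. For a matrix $M$ of size $d+1$ and $0\leq i\leq d$, $\operatorname{diag}(i,M)=(M_{0,i},M_{1,i+1},\dots,M_{d-i,d})$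 is its $i$-th diagonal vector. An O-sequence is a sequence of non-negative integers that occurs as the Hilbert function of a standard graded algebra (Macaulay's characterization). For a vector $\mathbf{v}$ of length $l$, $\mathbf{v}_+=(0,\mathbf{v})$ denotes the vector of length $l+1$ obtained by prepending a zero. *)

(* Defs.v *)
From HB Require Import structures.
From mathcomp Require Import all_boot all_order all_algebra.
From mathcomp Require Import mpoly.
Set Implicit Arguments. Unset Strict Implicit. Unset Printing Implicit Defensive.
Import GRing.Theory.
Local Open Scope ring_scope.

Section Defs.
Variables (k : fieldType) (N : nat).
Notation poly := {mpoly k[N]}.

(* homogeneous polynomials of (total) degree t (0 is homogeneous of every degree) *)
Definition homog_of (t : nat) (p : poly) : Prop := p \is t.-homog.

(* action of S = k[x_1..x_N] on the dual ring R = k[X_1..X_N] by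
   differentiation: x^m o F = d^m F / dX^m, extended linearly *)
Definition contract (g F : poly) : poly :=
  \sum_(m <- msupp g) g@_m *: mderivm m F.

Definition ann (F : poly) (g : poly) : Prop := contract g F = 0.

Definition indep_mod (W : poly -> Prop) (r : nat) (g : 'I_r -> poly) : Prop :=
  forall c : 'I_r -> k, W (\sum_(i < r) c i *: g i) -> forall i, c i = 0.

(* qdim V W r : the image of the set V in the quotient space S/W spans a
   space of dimension r (a maximal linearly independent family of classes
   of elements of V has exactly r elements) *)
Definition qdim (V W : poly -> Prop) (r : nat) : Prop :=
  (exists g : 'I_r -> poly, (forall i, V (g i)) /\ indep_mod W g) /\
  (forall g : 'I_r.+1 -> poly, (forall i, V (g i)) -> ~ indep_mod W g).

Definition homog_ideal (I : poly -> Prop) : Prop :=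
  [/\ I 0,
      forall p q, I p -> I q -> I (p + q),
      forall p q, I p -> I (q * p) &
      forall p t, I p -> I (pihomog mdeg t p)].

End Defs.

(* Hilbert function value of A = S/ann(F) in degree t : h_A(t) = r *)
Definition hilb_AG (k : fieldType) (n : nat) (F : {mpoly k[n]}) (t r : nat) :=
  qdim (@homog_of k n t) (ann F) r.

(* rk( x l^(j-i) : A_i -> A_j ) = r, where A = S/ann(F) and l in S_1 is a
   representative of the linear form in A_1 *)
Definition rk_mult (k : fieldType) (n : nat) (F l : {mpoly k[n]}) (i j r : nat) :=
  qdim (fun p => exists g, homog_of i g /\ p = l ^+ (j - i) * g) (ann F) r.

(* O-sequence: a (finite) sequence of non-negative integers that occurs as
   (an initial segment of) the Hilbert function of a standard graded
   k-algebra, i.e. of a quotient k[x_1..x_N]/I by a homogeneous ideal I *)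
Definition Oseq (k : fieldType) (h : seq int) : Prop :=
  exists (N : nat) (I : {mpoly k[N]} -> Prop), homog_ideal I /\
    forall t, (t < size h)%N ->
      exists r : nat, h`_t = r%:Z /\ qdim (@homog_of k N t) I r.

Definition is_rank_matrix (k : fieldType) (n d : nat) (F l : {mpoly k[n]})
    (M : 'M[nat]_(d.+1)) : Prop :=
  forall i j : 'I_(d.+1),
    if (i <= j)%N then rk_mult F l i j (M i j) else M i j = 0%N.

Definition mxe (d : nat) (M : 'M[nat]_(d.+1)) (i j : nat) : nat :=
  M (inord i) (inord j).

Definition mdiag (d : nat) (i : nat) (M : 'M[nat]_(d.+1)) : seq nat :=
  mkseq (fun t => mxe M t (t + i)) (d.+1 - i).

Definition vplus (v : seq nat) : seq nat := 0%N :: v.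

Definition vsub (v w : seq nat) : seq int :=
  [seq (p.1)%:Z - (p.2)%:Z | p <- zip v w].

(* Main.v *)
Require Import Defs.
From HB Require Import structures.
From mathcomp Require Import all_boot all_order all_algebra.
From mathcomp Require Import mpoly.
From mathcomp Require Import ssrcomplements.
From mathcomp Require Import zify.
Set Implicit Arguments. Unset Strict Implicit. Unset Printing Implicit Defensive.
Import GRing.Theory.
Local Open Scope ring_scope.

Section Contract.
Variables (k : fieldType) (n : nat).
Implicit Types (p q g G H : {mpoly k[n]}).

Lemma contract_wE b g G : (msize g <= b)%N ->
  contract g G = \sum_(m : 'X_{1..n < b}) g@_m *: mderivm m G.
Proof.
move=> lt_pk; pose I : subFinType _ := 'X_{1..n < b}.
rewrite /contract (big_mksub I) //=; first last.
  by move=> x /msize_mdeg_lt /leq_trans; apply.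
  by rewrite msupp_uniq.
by rewrite big_rmcond //= => i; move/memN_msupp_eq0 ->; rewrite scale0r.
Qed.

Definition contr G g := contract g G.

Lemma contr_is_linear G : linear (contr G).
Proof.
move=> c p q /=.
set b := maxn (msize (c *: p + q)) (maxn (msize p) (msize q)).
rewrite /contr (contract_wE (b := b) (g := c *: p + q)); last by rewrite leq_maxl.
rewrite (contract_wE (b := b) (g := p)); last by rewrite /b maxnCA leq_maxl.
rewrite (contract_wE (b := b) (g := q)); last by rewrite /b maxnA leq_maxr.
rewrite scaler_sumr -big_split /=; apply: eq_bigr => m _.
by rewrite linearP /= scalerDl scalerA.
Qed.

HB.instance Definition _ G :=
  GRing.isLinear.Build k {mpoly k[n]} {mpoly k[n]} _ (contr G)
    (contr_is_linear G).

Lemma contractX m G : contract 'X_[m] G = mderivm m G.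
Proof. by rewrite /contract msuppX big_seq1 mcoeffX eqxx scale1r. Qed.

Lemma contract0l G : contract 0 G = 0.
Proof. exact: (raddf0 (contr G)). Qed.

Lemma contractDl p q G : contract (p + q) G = contract p G + contract q G.
Proof. exact: (raddfD (contr G)). Qed.

Lemma contractZl c p G : contract (c *: p) G = c *: contract p G.
Proof. by rewrite -[LHS]/(contr G (c *: p)) linearZ. Qed.

Lemma contract_suml I (r : seq I) (P : pred I) (f : I -> {mpoly k[n]}) G :
  contract (\sum_(i <- r | P i) f i) G = \sum_(i <- r | P i) contract (f i) G.
Proof. exact: (raddf_sum (contr G)). Qed.

Lemma contract_is_linear_r g : linear (contract g).
Proof.
move=> c p q; rewrite /contract scaler_sumr -big_split /=; apply: eq_bigr => m _.
by rewrite linearP /= scalerDr !scalerA mulrC.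
Qed.

HB.instance Definition _ g :=
  GRing.isLinear.Build k {mpoly k[n]} {mpoly k[n]} _ (contract g)
    (contract_is_linear_r g).

Lemma contract0r g : contract g 0 = 0.
Proof. exact: raddf0. Qed.

Lemma contractM p q G : contract (p * q) G = contract p (contract q G).
Proof.
rewrite {1}[p]mpolyE mulr_suml contract_suml {2}/contract.
apply: eq_bigr => m _.
rewrite -scalerAl contractZl; congr (_ *: _).
rewrite {1}[q]mpolyE mulr_sumr contract_suml [in RHS]/contract raddf_sum /=.
apply: eq_bigr => m' _.
rewrite -scalerAr contractZl -mpolyXD contractX linearZ /=; congr (_ *: _).
by rewrite addmC mderivmDm.
Qed.

End Contract.
Section Homog.
Variables (k : fieldType) (n : nat).
Implicit Types (p q g G H : {mpoly k[n]}).

Lemma mono_term (m m' : 'X_{1..n}) :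
  (\prod_(i < n) (m' i)^_(m i) != 0)%N ->
  (m <= m')%MM /\ mdeg (m' - m) = (mdeg m' - mdeg m)%N /\ (mdeg m <= mdeg m')%N.
Proof.
rewrite prod_nat_seq_neq0 => /allP H.
have le : (m <= m')%MM.
  apply/mnm_lepP => i; have := H i (mem_index_enum i) => /=.
  by rewrite -lt0n ffact_gt0.
have := submK le => /(congr1 mdeg); rewrite mdegD => E.
split=> //; split; first by rewrite -E addnK.
by rewrite -E leq_addl.
Qed.

Lemma pihomog_mulhomog e s q p : q \is e.-homog ->
  pihomog mdeg s (q * p) = if (e <= s)%N then q * pihomog mdeg (s - e) p else 0.
Proof.
move=> hq; set B := maxn (msize p) s.+1.
rewrite {1}[p](@pihomog_partitionE _ _ mdeg B); last by rewrite leq_maxl.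
rewrite mulr_sumr raddf_sum /=.
have E b : pihomog mdeg s (q * pihomog mdeg b p) =
    if (e + b == s)%N then q * pihomog mdeg b p else 0.
  have hb : q * pihomog mdeg b p \is (e + b).-homog.
    by apply: dhomogM => //; apply: pihomogP.
  case: eqP => [<-|/eqP ne]; first by rewrite pihomog_dE.
  exact: pihomog_ne0 ne hb.
under eq_bigr do rewrite E.
case: leqP => [le_as|lt_sa].
  have lt : (s - e < B)%N by rewrite leq_max ltnS leq_subr orbT.
  rewrite (bigD1 (Ordinal lt)) //= subnKC // eqxx big1 ?addr0 // => i.
  move=> ne; case: eqP => // E'; case/eqP: ne; apply: val_inj => /=.
  by rewrite -E' addKn.
by apply: big1 => i _; case: eqP => // E'; move: lt_sa; rewrite -E' ltnNge leq_addr.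
Qed.

End Homog.

Section Homog2.
Variables (k : fieldType) (n : nat).
Implicit Types (p q G H : {mpoly k[n]}).

Lemma contract_homog_gen e g p G : p \is e.-homog -> G \is g.-homog ->
  contract p G \is (g - e).-homog /\ ((g < e)%N -> contract p G = 0).
Proof.
move=> /dhomogP hp /dhomogP hG.
have T m m' : m \in msupp p -> m' \in msupp G ->
   let t := (G@_m' * (\prod_(i < n) (m' i)^_(m i))%:R) *: ('X_[m'-m] : {mpoly k[n]}) in
   t \is (g - e).-homog /\ ((g < e)%N -> t = 0).
  move=> mp m'G /=.
  case: (boolP (\prod_(i < n) (m' i)^_(m i) == 0)%N) => [/eqP ->|nz].
    by rewrite mulr0 scale0r; split=> //; apply: dhomog0.
  have [_ [E le]] := mono_term nz.
  rewrite (hp _ mp) (hG _ m'G) in E le; split; last by rewrite ltnNge le.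
  by apply: rpredZ; rewrite dhomogX; apply/eqP.
rewrite /contract; split.
  rewrite big_seq; apply: rpred_sum => m mp; apply: rpredZ; rewrite mderivmE.
  by rewrite big_seq; apply: rpred_sum => m' m'G; have [] := T m m' mp m'G.
move=> lt; apply: big1_seq => m /= mp; rewrite mderivmE big1_seq ?scaler0 //.
by move=> m' /= m'G; have [_ ->] := T m m' mp m'G.
Qed.

Lemma contract_homog e g p G : p \is e.-homog -> G \is g.-homog ->
  contract p G \is (g - e).-homog.
Proof. by move=> hp hG; have [] := contract_homog_gen hp hG. Qed.

Lemma contract_homog0 e g p G : p \is e.-homog -> G \is g.-homog ->
  (g < e)%N -> contract p G = 0.
Proof. by move=> hp hG; have [_] := contract_homog_gen hp hG. Qed.

Lemma pihomog_contract g u p G : G \is g.-homog -> (u <= g)%N ->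
  pihomog mdeg u (contract p G) = contract (pihomog mdeg (g - u) p) G.
Proof.
move=> hG le; set B := maxn (msize p) g.+1.
rewrite {1}[p](@pihomog_partitionE _ _ mdeg B); last by rewrite leq_maxl.
rewrite contract_suml raddf_sum /=.
have E b : pihomog mdeg u (contract (pihomog mdeg b p) G) =
    if (b == g - u)%N then contract (pihomog mdeg b p) G else 0.
  have hb := contract_homog ((pihomogP mdeg b p)) hG.
  case: (leqP b g) => [lebg|ltgb].
    case: eqP => [Eb|ne].
      by rewrite pihomog_dE //; move: hb; rewrite Eb subKn.
    apply: (pihomog_ne0 _ hb); apply/eqP => E'; apply: ne.
    by rewrite -E' subKn.
  rewrite (contract_homog0 ((pihomogP mdeg b p)) hG ltgb) raddf0.
  by case: eqP.
under eq_bigr do rewrite E.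
have lt : (g - u < B)%N by rewrite leq_max ltnS leq_subr orbT.
rewrite (bigD1 (Ordinal lt)) //= eqxx big1 ?addr0 // => i ne.
case: eqP => // E'; case/eqP: ne; exact: val_inj.
Qed.

End Homog2.

Section HClos.
Variables (k : fieldType) (n : nat).
Implicit Types (p q : {mpoly k[n]}).

Definition hclos (J : {mpoly k[n]} -> Prop) p := forall s, J (pihomog mdeg s p).

Lemma hclos_ideal (J : {mpoly k[n]} -> Prop) : J 0 ->
  (forall p q, J p -> J q -> J (p + q)) -> (forall p q, J p -> J (q * p)) ->
  homog_ideal (hclos J).
Proof.
move=> J0 JD JM; split.
- by move=> s; rewrite pihomog0.
- by move=> p q Hp Hq s; rewrite pihomogD; apply: JD.
- move=> p q Hp s.
  rewrite {1}[q](@pihomog_partitionE _ _ mdeg (msize q)) //.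
  rewrite mulr_suml raddf_sum /=.
  apply: (big_ind J) => //= a _.
  rewrite (pihomog_mulhomog _ _ (pihomogP mdeg a q)).
  by case: leqP => // _; apply: JM.
- move=> p t Hp s; case: (eqVneq t s) => [<-|ne].
    by rewrite pihomog_id; apply: Hp.
  by rewrite (pihomog_ne0 ne (pihomogP mdeg t p)).
Qed.

Lemma hclos_homog (J : {mpoly k[n]} -> Prop) t p : J 0 -> p \is t.-homog ->
  (hclos J p <-> J p).
Proof.
move=> J0 hp; split=> [H|H s]; first by have := H t; rewrite pihomog_dE.
case: (eqVneq t s) => [<-|ne]; first by rewrite pihomog_dE.
by rewrite (pihomog_ne0 ne hp).
Qed.

End HClos.
Section LA.
Variable K : fieldType.

Lemma linfunE_gen (aT rT : vectType K) (g : aT -> rT) :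
  linear g -> forall v, linfun g v = g v.
Proof.
move=> lin v.
pose gL : {linear aT -> rT} := HB.pack g (GRing.isLinear.Build K aT rT *:%R g lin).
exact: (lfunE gL v).
Qed.

Definition lfree (U : vectType K) s (w : 'I_s -> U) :=
  forall c : 'I_s -> K, \sum_(i < s) c i *: w i = 0 -> forall i, c i = 0.

Lemma lfree_free (U : vectType K) s (w : 'I_s -> U) :
  lfree w <-> free [tuple w i | i < s].
Proof.
split=> [H|/freeP H c Hc].
  apply/freeP => c Hc; apply: H; apply: etrans Hc; apply: eq_bigr => i _.
  by rewrite -tnth_nth tnth_mktuple.
apply: H; apply: etrans Hc; apply: eq_bigr => i _.
by rewrite -tnth_nth tnth_mktuple.
Qed.

Lemma S1 (U : vectType K) (U' : {vspace U}) s :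
  (exists w : 'I_s -> U, (forall i, w i \in U') /\ lfree w) <-> (s <= \dim U')%N.
Proof.
split.
  move=> [w [wU /lfree_free fr]].
  have := fr; rewrite /free => /eqP; rewrite size_tuple => <-.
  apply: dimvS; apply/span_subvP => x /mapP [i _ ->]; exact: wU.
case: s => [|s] le.
  by exists (fun=> 0); split=> [i|c _ i]; case: i.
set b := vbasis U'.
exists (fun i : 'I_s.+1 => b`_i); split.
  move=> i; apply: vbasis_mem; apply: mem_nth; rewrite size_tuple.
  exact: leq_trans (ltn_ord i) le.
move=> c Hc.
have fb : free b := basis_free (vbasisP U').
move/freeP: fb => fb.
pose c' (j : 'I_(\dim U')) := if (j < s.+1)%N then c (inord j) else 0.
have Hc' : \sum_(j < \dim U') c' j *: b`_j = 0.
  apply: etrans Hc.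
  pose F (j : nat) := (if (j < s.+1)%N then c (inord j) else 0) *: b`_j.
  rewrite [RHS](eq_bigr (fun i : 'I_s.+1 => F i)); last first.
    by move=> i _; rewrite /F ltn_ord inord_val.
  rewrite (big_ord_widen _ F le) [RHS]big_mkcond /=.
  apply: eq_bigr => j _; rewrite /c' /F; case: ifP => // _.
  by rewrite scale0r.
move=> i; have := fb c' Hc' (widen_ord le i).
by rewrite /c' /= ltn_ord inord_val.
Qed.

End LA.

Section Q.
Variables (K : fieldType) (N : nat) (V U : vectType K).
Variable emb : {linear V -> {mpoly K[N]}}.

Lemma QS (f : 'Hom(V, U)) (X : {vspace V}) (P W : {mpoly K[N]} -> Prop) s :
  (forall p, P p <-> exists2 v, v \in X & p = emb v) ->
  (forall v, W (emb v) <-> f v = 0) ->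
  (exists g : 'I_s -> {mpoly K[N]}, (forall i, P (g i)) /\ indep_mod W g)
  <-> (s <= \dim (f @: X))%N.
Proof.
move=> HP HW; rewrite -S1; split.
  move=> [g [Pg Ig]].
  have /fin_all_exists2 [v vX gv] : forall i, exists2 v, v \in X & g i = emb v.
    by move=> i; apply/HP.
  exists (fun i => f (v i)); split; first by move=> i; apply: memv_img.
  move=> c Hc; apply: Ig.
  have -> : \sum_(i < s) c i *: g i = emb (\sum_(i < s) c i *: v i).
    by rewrite linear_sum; apply: eq_bigr => i _; rewrite linearZ gv.
  by apply/HW; rewrite linear_sum; apply: (etrans _ Hc); apply: eq_bigr => i _; rewrite linearZ.
move=> [w [wX Fw]].
have /fin_all_exists2 [v vX wv] : forall i, exists2 v, v \in X & w i = f v.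
  by move=> i; apply/memv_imgP.
exists (fun i => emb (v i)); split; first by move=> i; apply/HP; exists (v i).
move=> c Hc; apply: Fw.
have : W (emb (\sum_(i < s) c i *: v i)).
  have -> : emb (\sum_(i < s) c i *: v i) = \sum_(i < s) c i *: emb (v i).
    by rewrite linear_sum; apply: eq_bigr => i _; rewrite linearZ.
  by [].
move/HW; rewrite linear_sum => H0; apply: (etrans _ H0); apply: eq_bigr => i _; by rewrite linearZ wv.
Qed.

Lemma Qdim (f : 'Hom(V, U)) (X : {vspace V}) (P W : {mpoly K[N]} -> Prop) r :
  (forall p, P p <-> exists2 v, v \in X & p = emb v) ->
  (forall v, W (emb v) <-> f v = 0) ->
  (qdim P W r <-> r = \dim (f @: X)).
Proof.
move=> HP HW; have QS' s := @QS f X P W s HP HW; rewrite /qdim; split.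
  move=> [/QS' le H]; apply/eqP; rewrite eqn_leq le /=; rewrite leqNgt; apply/negP.
  by move/QS' => [g [Pg Ig]]; exact: H g Pg Ig.
move=> ->; split; first by apply/QS'.
move=> g Pg Ig; have : ((\dim (f @: X)).+1 <= \dim (f @: X))%N by apply/QS'; exists g.
by rewrite ltnn.
Qed.

End Q.

Lemma qdim_ext (k : fieldType) (N : nat) (P P' W : {mpoly k[N]} -> Prop) r :
  (forall p, P p <-> P' p) -> qdim P W r -> qdim P' W r.
Proof.
move=> E [[g [Pg Ig]] H]; split; first by exists g; split=> // i; apply/E.
by move=> g' Pg'; apply: H => i; apply/E.
Qed.

Lemma frob_dim (K : fieldType) (aT rT : vectType K) (g : 'Hom(aT, rT)) (X Y : {vspace aT}) :
  (Y <= X)%VS -> (\dim (g @: X) + \dim Y <= \dim X + \dim (g @: Y))%N.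
Proof.
move=> YX; have h1 := limg_ker_dim g X; have h2 := limg_ker_dim g Y.
have h3 : (\dim (Y :&: lker g) <= \dim (X :&: lker g))%N.
  by apply: dimvS; apply: capvS.
lia.
Qed.

Section Main.
Variables (k : fieldType) (n d : nat) (F l : {mpoly k[n.+1]}).
Hypotheses (hF : F \is d.-homog) (hl : l \is 1.-homog).

Local Notation V e := (dhomog n.+1 k e).
Local Notation mp := {mpoly k[n.+1]}.

Lemma dh_inj e : injective (@mpoly_of_dhomog n.+1 k e).
Proof. exact: val_inj. Qed.

Lemma indhomogK e (p : mp) : p \is e.-homog -> mpoly_of_dhomog (@indhomog n.+1 k e p) = p.
Proof. by move=> h; rewrite /indhomog; apply: insubdK. Qed.

Definition hfun e e' (h : mp -> mp) (v : V e) : V e' := @indhomog n.+1 k e' (h (val v)).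
Definition mkhom e e' (h : mp -> mp) : 'Hom(V e, V e') := linfun (@hfun e e' h).

Lemma mkhomE e e' (h : mp -> mp) :
  (forall a p q, h (a *: p + q) = a *: h p + h q) ->
  (forall p, p \is e.-homog -> h p \is e'.-homog) ->
  forall v, mpoly_of_dhomog (mkhom e e' h v) = h v.
Proof.
move=> hlin hhom v.
have E (u : V e) : val (@hfun e e' h u) = h (val u).
  rewrite /hfun /indhomog; apply: insubdK; apply: hhom; exact: dhomog_is_dhomog.
rewrite /mkhom linfunE_gen ?E // => a u w; apply: dh_inj.
by rewrite /= !E /= hlin.
Qed.

Lemma lpow_homog t : l ^+ t \is t.-homog.
Proof. by have := dhomogMn t hl; rewrite mul1n. Qed.

Definition phi e := mkhom e (d - e) (fun p => contract p F).
Definition mu a e e' := mkhom e e' (fun p => l ^+ a * p).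
Definition psi a e e' := mkhom e e' (fun p => contract (l ^+ a) p).

Lemma phiE e v : mpoly_of_dhomog (phi e v) = contract v F.
Proof.
apply: mkhomE; first by move=> a p q; rewrite contractDl contractZl.
by move=> p hp; apply: contract_homog hp hF.
Qed.

Lemma muE a e e' v : e' = (a + e)%N -> mpoly_of_dhomog (mu a e e' v) = l ^+ a * v.
Proof.
move=> ->; apply: mkhomE; first by move=> c p q; rewrite mulrDr scalerAr.
by move=> p hp; apply: dhomogM => //; apply: lpow_homog.
Qed.

Lemma psiE a e e' v : e' = (e - a)%N -> mpoly_of_dhomog (psi a e e' v) = contract (l ^+ a) v.
Proof.
move=> ->; apply: mkhomE; first by move=> c p q; rewrite linearP.
by move=> p hp; apply: contract_homog hp; apply: lpow_homog.
Qed.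

Lemma phi_mu i j : (i <= j)%N ->
  (phi j \o mu (j - i) i j)%VF = (psi (j - i) (d - i) (d - j) \o phi i)%VF.
Proof.
move=> le; apply/lfunP => v; rewrite !comp_lfunE; apply: dh_inj.
rewrite phiE muE ?subnK // psiE; last by lia.
by rewrite phiE contractM.
Qed.

Lemma psi_comp a b c e e' e'' : c = (a + b)%N -> e' = (e - a)%N -> e'' = (e' - b)%N ->
  (psi b e' e'' \o psi a e e')%VF = psi c e e''.
Proof.
move=> Ec E' E''; apply/lfunP => v; rewrite comp_lfunE; apply: dh_inj.
rewrite psiE // psiE // psiE; last by lia.
by rewrite -contractM -exprD addnC Ec.
Qed.


Variable M : 'M[nat]_(d.+1).
Hypothesis HM : is_rank_matrix F l M.

Lemma Hrk i j : (i <= j)%N -> (j <= d)%N -> rk_mult F l i j (mxe M i j).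
Proof.
move=> le jd; have := HM (inord i) (inord j).
rewrite /mxe !inordK ?ltnS //; last by apply: leq_trans jd.
by rewrite le.
Qed.

Lemma Mval1 i j : (i <= j)%N -> (j <= d)%N ->
  mxe M i j = \dim ((phi j \o mu (j - i) i j)%VF @: fullv).
Proof.
move=> le jd; have := Hrk le jd; rewrite /rk_mult.
rewrite (@Qdim _ _ _ _ (@mpoly_of_dhomog n.+1 k j : {linear _ -> _}) (phi j) (limg (mu (j - i) i j))).
- by rewrite limg_comp.
- move=> p; split.
    move=> [g [hg ->]]; exists (mu (j - i) i j (indhomog i g)).
      by apply: memv_img; apply: memvf.
    by rewrite /= muE ?subnK // /indhomog insubdK.
  move=> [v /memv_imgP [u _ ->] ->]; exists (val u); split; first exact: dhomog_is_dhomog.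
  by rewrite /= muE ?subnK.
- move=> v; rewrite /ann /= -phiE; split=> H.
    by apply: dh_inj; rewrite H.
  by rewrite H.
Qed.

Lemma Mval i j : (i <= j)%N -> (j <= d)%N ->
  mxe M i j = \dim (psi (j - i) (d - i) (d - j) @: limg (phi i)).
Proof. by move=> le jd; rewrite Mval1 // phi_mu // limg_comp. Qed.

Lemma part_hilb t : (t <= d)%N -> hilb_AG F t (nth 0%N (mdiag 0 M) t).
Proof.
move=> td; rewrite /mdiag nth_mkseq ?subn0 ?ltnS //.
have td' : (t + 0 <= d)%N by rewrite addn0.
have := Hrk (leq_addr 0 t) td'; rewrite /rk_mult /hilb_AG.
apply: qdim_ext => p; rewrite addn0 subnn expr0.
by split=> [[g [hg ->]]|hp]; [rewrite mul1r | exists p; rewrite mul1r].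
Qed.

Lemma part1 i : (i <= d)%N -> Oseq k [seq x%:Z | x <- mdiag i M].
Proof.
move=> id.
pose J (p : mp) := contract (l ^+ i * p) F = 0.
have J0 : J 0 by rewrite /J mulr0 contract0l.
exists n.+1, (hclos J); split.
  apply: hclos_ideal => //.
  - by move=> p q Hp Hq; rewrite /J mulrDr contractDl Hp Hq addr0.
  - by move=> p q Hp; rewrite /J mulrCA contractM Hp contract0r.
move=> t; rewrite size_map size_mkseq => lt.
have tid : (t + i <= d)%N by lia.
exists (mxe M t (t + i)); split.
  by rewrite (nth_map 0%N) ?size_mkseq // nth_mkseq.
rewrite (@Qdim _ _ _ _ (@mpoly_of_dhomog n.+1 k t : {linear _ -> _})
   (phi (t + i) \o mu i t (t + i))%VF fullv).
- by rewrite Mval1 ?leq_addr // addKn.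
- move=> p; split=> [hp|[v _ ->]]; last exact: dhomog_is_dhomog.
  by exists (indhomog t p); [exact: memvf | rewrite /= indhomogK].
- move=> v /=; rewrite (@hclos_homog _ _ J t (v : mp) J0); last exact: dhomog_is_dhomog.
  rewrite /J comp_lfunE; split=> H.
    by apply: dh_inj; rewrite phiE (muE _ (addnC t i)) H.
  by have := congr1 (@mpoly_of_dhomog _ _ _) H; rewrite phiE (muE _ (addnC t i)).
Qed.

Lemma psi1W i : (psi 1 (d - i) (d - i.+1) @: limg (phi i) <= limg (phi i.+1))%VS.
Proof.
have E := phi_mu (leqnSn i); rewrite subSnn in E.
apply/subvP => w /memv_imgP [u /memv_imgP [v _ ->] ->].
by rewrite -comp_lfunE -E comp_lfunE; apply: memv_img; exact: memvf.
Qed.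

Lemma part3 i j : (i.+1 <= j)%N -> (j.+1 <= d)%N ->
  (mxe M i j + mxe M i.+1 j.+1 <= mxe M i.+1 j + mxe M i j.+1)%N.
Proof.
move=> ij jd.
have E1 := @Mval i j ltac:(lia) ltac:(lia).
have E2 := @Mval i.+1 j.+1 ltac:(lia) ltac:(lia).
have E3 := @Mval i.+1 j ltac:(lia) ltac:(lia).
have E4 := @Mval i j.+1 ltac:(lia) ltac:(lia).
have C1 : (psi (j - i.+1) (d - i.+1) (d - j) \o psi 1 (d - i) (d - i.+1))%VF
    = psi (j - i) (d - i) (d - j) by apply: psi_comp; lia.
have C2 : (psi 1 (d - j) (d - j.+1) \o psi (j - i.+1) (d - i.+1) (d - j))%VF
    = psi (j.+1 - i.+1) (d - i.+1) (d - j.+1) by apply: psi_comp; lia.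
have C3 : (psi 1 (d - j) (d - j.+1) \o psi (j - i) (d - i) (d - j))%VF
    = psi (j.+1 - i) (d - i) (d - j.+1) by apply: psi_comp; lia.
have YX := limgS (psi (j - i.+1) (d - i.+1) (d - j)) (psi1W i).
have := frob_dim (psi 1 (d - j) (d - j.+1)) YX.
have D1 : (psi (j - i.+1) (d - i.+1) (d - j) @: (psi 1 (d - i) (d - i.+1) @: limg (phi i))
   = psi (j - i) (d - i) (d - j) @: limg (phi i))%VS by rewrite -limg_comp C1.
have D2 : (psi 1 (d - j) (d - j.+1) @: (psi (j - i.+1) (d - i.+1) (d - j) @: limg (phi i.+1))
   = psi (j.+1 - i.+1) (d - i.+1) (d - j.+1) @: limg (phi i.+1))%VS by rewrite -limg_comp C2.
have D3 : (psi 1 (d - j) (d - j.+1) @: (psi (j - i) (d - i) (d - j) @: limg (phi i))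
   = psi (j.+1 - i) (d - i) (d - j.+1) @: limg (phi i))%VS by rewrite -limg_comp C3.
rewrite D2 D1 D3 -E1 -E2 -E3 -E4.
lia.
Qed.

Lemma part2 i : (i < d)%N -> Oseq k (vsub (mdiag i M) (vplus (mdiag i.+1 M))).
Proof.
move=> id.
pose J (p : mp) := exists q, contract (l ^+ i * p) F = contract (l ^+ i.+1 * q) F.
have J0 : J 0 by exists 0; rewrite !mulr0.
exists n.+1, (hclos J); split.
  apply: hclos_ideal => //.
  - move=> p q [p1 E1] [q1 E2]; exists (p1 + q1).
    by rewrite !mulrDr !contractDl E1 E2.
  - move=> p r [q E]; exists (r * q).
    by rewrite [in LHS]mulrCA [in LHS]contractM E -contractM mulrCA.
have sa : size (mdiag i M) = (d.+1 - i)%N by rewrite size_mkseq.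
have sb : size (vplus (mdiag i.+1 M)) = (d.+1 - i)%N by rewrite /= size_mkseq; lia.
move=> t; rewrite /vsub size_map size_zip sa sb minnn => lt.
have tid : (t + i <= d)%N by lia.
rewrite (nth_map (0%N, 0%N)); last by rewrite size_zip sa sb minnn.
rewrite nth_zip; last by rewrite sa sb.
rewrite /= {1}/mdiag nth_mkseq //.
have HP t0 (p : mp) : homog_of t0 p <-> exists2 v : V t0, v \in fullv & p = v.
  split=> [hp|[v _ ->]]; last exact: dhomog_is_dhomog.
  by exists (indhomog t0 p); [exact: memvf | rewrite /= indhomogK].
case: t lt tid => [|t] lt tid /=.
  exists (mxe M 0 (0 + i)); split; first by rewrite subr0.
  rewrite (@Qdim _ _ _ _ (@mpoly_of_dhomog n.+1 k 0 : {linear _ -> _})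
     (phi (0 + i) \o mu i 0 (0 + i))%VF fullv).
  - by rewrite Mval1 ?leq_addr // addKn.
  - exact: HP.
  move=> v /=; rewrite (@hclos_homog _ _ J 0 (v : mp) J0); last exact: dhomog_is_dhomog.
  rewrite comp_lfunE; split.
    move=> [q E]; apply: dh_inj; rewrite phiE (muE _ (addnC 0 i)) /=.
    have hv : l ^+ i * (v : mp) \is (i + 0).-homog.
      by apply: dhomogM; [apply: lpow_homog | exact: dhomog_is_dhomog].
    rewrite -(pihomog_dE (contract_homog hv hF)) E (@pihomog_contract _ _ d _ _ _ hF); last exact: leq_subr.
    have -> : (d - (d - (i + 0)) = i)%N by lia.
    by rewrite (pihomog_mulhomog _ _ (lpow_homog i.+1)) ltnn contract0l.
  move=> H; exists 0; rewrite mulr0 contract0l.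
  by have := congr1 (@mpoly_of_dhomog _ _ _) H; rewrite phiE (muE _ (addnC 0 i)).
rewrite nth_mkseq; last by lia.
have he1 : (t.+1 + i = i + t.+1)%N by lia.
have he2 : (t.+1 + i = i.+1 + t)%N by lia.
pose f := (phi (t.+1 + i) \o mu i t.+1 (t.+1 + i))%VF.
pose Y := ((phi (t.+1 + i) \o mu i.+1 t (t.+1 + i)) @: fullv)%VS.
pose pi := (\1 - projv Y)%VF.
have C1 w : (pi w == 0) = (w \in Y).
  rewrite /pi add_lfunE opp_lfunE id_lfunE subr_eq0.
  apply/eqP/idP => [->|wY]; first exact: memv_proj.
  by rewrite projv_id.
have C2 : (Y <= f @: fullv)%VS.
  apply/subvP => w /memv_imgP [u _ ->]; apply/memv_imgP.
  have hu : l * (u : mp) \is t.+1.-homog.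
    by have := dhomogM hl (dhomog_is_dhomog u); rewrite add1n.
  exists (indhomog t.+1 (l * (u : mp))); first exact: memvf.
  apply: dh_inj; rewrite !comp_lfunE !phiE (muE _ he2) (muE _ he1) indhomogK //.
  by rewrite exprSr mulrA.
have C3 : (f @: fullv :&: lker pi)%VS = Y.
  apply/vspaceP => w; rewrite memv_cap memv_ker C1.
  apply/andP/idP => [[]//|wY]; split => //; exact: (subvP C2).
have E1 : mxe M t.+1 (t.+1 + i) = \dim (f @: fullv).
  by rewrite Mval1 ?leq_addr // addKn.
have E2 : mxe M t (t + i.+1) = \dim Y.
  rewrite (_ : (t + i.+1 = t.+1 + i)%N); last by lia.
  rewrite Mval1; [|lia|lia].
  by rewrite (_ : (t.+1 + i - t = i.+1)%N); last by lia.
exists (\dim (f @: fullv) - \dim Y)%N; split.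
  by rewrite E1 E2 subzn // dimvS.
rewrite (@Qdim _ _ _ _ (@mpoly_of_dhomog n.+1 k t.+1 : {linear _ -> _})
   (pi \o f)%VF fullv).
- rewrite [in RHS]limg_comp; have := limg_ker_dim pi (f @: fullv); rewrite C3 => H.
  by rewrite -H addKn.
- exact: HP.
move=> v /=; rewrite (@hclos_homog _ _ J t.+1 (v : mp) J0); last exact: dhomog_is_dhomog.
rewrite comp_lfunE -[pi (f v) = 0]/(pi (f v) = 0).
have -> : (pi (f v) = 0) <-> (f v \in Y).
  by rewrite -C1; split=> [->|/eqP].
split.
  move=> [q E]; apply/memv_imgP.
  exists (indhomog t (pihomog mdeg t q)); first exact: memvf.
  apply: dh_inj; rewrite !comp_lfunE !phiE (muE _ he2) (muE _ he1) indhomogK; last exact: pihomogP.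
  have hv : l ^+ i * (v : mp) \is (i + t.+1).-homog.
    by apply: dhomogM; [apply: lpow_homog | exact: dhomog_is_dhomog].
  rewrite -(pihomog_dE (contract_homog hv hF)) E (@pihomog_contract _ _ d _ _ _ hF); last exact: leq_subr.
  have -> : (d - (d - (i + t.+1)) = i + t.+1)%N by lia.
  rewrite (pihomog_mulhomog _ _ (lpow_homog i.+1)).
  have -> : (i.+1 <= i + t.+1)%N by lia.
  by have -> : (i + t.+1 - i.+1 = t)%N by lia.
move=> /memv_imgP [u _ Eu]; exists (u : mp).
by have := congr1 (@mpoly_of_dhomog _ _ _) Eu; rewrite !comp_lfunE !phiE (muE _ he2) (muE _ he1).
Qed.

End Main.


Theorem corollary3p9 (k : fieldType) (n d : nat)
  (F l : {mpoly k[n]}) (M : 'M[nat]_(d.+1)) :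
  [pchar k] =i pred0 ->
  (2 <= n)%N -> (2 <= d)%N ->
  F \is d.-homog -> F != 0 ->
  l \is 1.-homog ->
  (forall i j : 'I_(d.+1), (j < i)%N -> M i j = 0%N) ->
  is_rank_matrix F l M ->
  [/\ (forall i, (i <= d)%N -> Oseq k [seq x%:Z | x <- mdiag i M]),
      (forall t, (t <= d)%N -> hilb_AG F t (nth 0%N (mdiag 0 M) t)),
      (forall i, (i < d)%N ->
         Oseq k (vsub (mdiag i M) (vplus (mdiag i.+1 M)))) &
      (forall i j, (i.+1 <= j)%N -> (j.+1 <= d)%N ->
         (mxe M i j + mxe M i.+1 j.+1 <= mxe M i.+1 j + mxe M i j.+1)%N)].
Proof.
move=> _ n2 _ hF _ hl _ HM.
case: n n2 F l hF hl HM => [//|n] _ F l hF hl HM.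
split.
- by move=> i id; apply: (part1 hF hl HM id).
- by move=> t td; apply: (part_hilb HM td).
- by move=> i id; apply: (part2 hF hl HM id).
- by move=> i j ij jd; apply: (part3 hF hl HM ij jd).
Qed.
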